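(* Let $(G,\sigma)$ be a finite connected signed graph and $p>1$. Then the first (smallest) nonzero eigenvalue $\lambda_p^\sigma$ of the signed $p$-Laplacian $\Delta_p^\sigma$ satisfies \[ \lambda_{p}^{\sigma}\geq\frac{1}{2}\left(\frac{2}{p\cdot \mathrm{vol}(G)}\right)^{p}, \] where $\mathrm{vol}(G)=\sum_{x\in V}d_x$.
   Context: $G=(V,E)$ is a finite simple connected graph with degrees $d_x$; $\sigma:E\to\{\pm1\}$, $\sigma_{xy}=\sigma(\{x,y\})$. For $p>1$, $\Delta_{p}^{\sigma}f(x)=\frac{1}{d_{x}}\sum_{y\sim x}|\sigma_{xy}f(y)-f(x)|^{p-2}(\sigma_{xy}f(y)-f(x))$ (with $|t|^{p-2}t=0$ at $t=0$). A real $\lambda$ is an eigenvalue of $\Delta_p^\sigma$ if there is a nonzero $f$ with $-\Delta_{p}^{\sigma}f(x)=\lambda|f(x)|^{p-2}f(x)$ for all $x\in V$. *)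

(* Defs.v *)
From HB Require Import structures.
From mathcomp Require Import all_boot all_order all_algebra.
From mathcomp Require Import all_classical all_reals.
From mathcomp Require Import exp.
Set Implicit Arguments. Unset Strict Implicit. Unset Printing Implicit Defensive.
Import Order.TTheory GRing.Theory Num.Theory.
Local Open Scope ring_scope.

Definition simple_graph (T : finType) (e : rel T) : Prop :=
  symmetric e /\ irreflexive e.

Definition connected_graph (T : finType) (e : rel T) : Prop :=
  forall x y : T, connect e x y.

(* A signature sigma : E -> {+1,-1}, encoded as a function on pairs
   which is symmetric and +-1 valued on edges (its values off edges are
   irrelevant). *)
Definition signature (T : finType) (R : numDomainType) (e : rel T)
  (sigma : T -> T -> R) : Prop :=
  forall x y, e x y -> sigma x y = sigma y x /\ (sigma x y = 1 \/ sigma x y = -1).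

Definition deg (T : finType) (e : rel T) (x : T) : nat := #|[set y | e x y]|.

Definition vol (R : numDomainType) (T : finType) (e : rel T) : R :=
  \sum_(x : T) (deg e x)%:R.

Definition phip (R : realType) (p : R) (t : R) : R :=
  if t == 0 then 0 else powR `|t| (p - 2) * t.

Definition signed_pLap (R : realType) (T : finType) (e : rel T)
  (sigma : T -> T -> R) (p : R) (f : T -> R) (x : T) : R :=
  (deg e x)%:R^-1 * \sum_(y : T | e x y) phip p (sigma x y * f y - f x).

Definition is_eigenvalue (R : realType) (T : finType) (e : rel T)
  (sigma : T -> T -> R) (p : R) (lambda : R) : Prop :=
  exists f : T -> R, (exists x, f x != 0) /\
    forall x, - signed_pLap e sigma p f x = lambda * phip p (f x).

(* Main.v *)
Require Import Defs.
From HB Require Import structures.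
From mathcomp Require Import all_boot all_order all_algebra.
From mathcomp Require Import all_classical all_reals.
From mathcomp Require Import exp.
From mathcomp Require Import interval_inference convex hoelder.
From mathcomp Require Import ring lra zify.
Import Order.TTheory GRing.Theory Num.Theory.
Local Open Scope ring_scope.

Section All.
Variables (R : realType) (T : finType) (e : rel T) (sigma : T -> T -> R) (p : R).
Hypotheses (p1 : 1 < p) (hsym : symmetric e) (hirr : irreflexive e)
  (hsig : signature e sigma) (hconn : connected_graph e).

Lemma conv2 (r t x y : R) : 1 <= r -> 0 <= t -> t <= 1 -> 0 <= x -> 0 <= y ->
  powR (t*x + (1-t)*y) r <= t * powR x r + (1-t) * powR y r.
Proof.
move=> r1 t0 t1 x0 y0.
have := @convex_powR R r r1 (Itv01 t0 t1) x y.
rewrite !inE /= !in_itv /= !andbT => /(_ x0 y0).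
by rewrite !convRE /=.
Qed.

Lemma powRV (K r : R) : 0 < K -> powR (K^-1) r = (powR K r)^-1.
Proof.
move=> K0; have := @powRM _ K K^-1 r (ltW K0); rewrite invr_ge0 (ltW K0) => /(_ isT).
rewrite mulfV ?gt_eqF // powR1 => h.
by rewrite -[RHS]mul1r h mulrAC mulfV ?mul1r // gt_eqF // powR_gt0.
Qed.

Lemma pmean (r : R) (s : seq R) : 1 <= r -> all (fun a => 0 <= a) s ->
  powR (\sum_(a <- s) a) r <= powR (size s)%:R (r-1) * \sum_(a <- s) powR a r.
Proof.
move=> r1; have r0 : 0 < r by apply: lt_le_trans r1.
elim: s => [|a s IH] /=.
  by rewrite !big_nil powR0 ?gt_eqF // mulr0.
case/andP=> a0 sa; have {}IH := IH sa.
have A0 : 0 <= \sum_(b <- s) b by rewrite big_seq sumr_ge0 // => i /(allP sa).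
rewrite !big_cons.
case: s IH sa A0 => [|b s] IH sa A0.
  by rewrite !big_nil !addr0 powR1 mul1r.
set A := \sum_(j <- b :: s) j in IH A0 *; set SA := \sum_(j <- b :: s) powR j r in IH *.
set K : R := (size (b :: s))%:R.
have K0 : 0 < K by rewrite ltr0n.
have K10 : 0 < K + 1 by rewrite addr_gt0.
set t := K / (K + 1).
have t0 : 0 <= t by rewrite divr_ge0 // ltW.
have t1 : t <= 1 by rewrite ler_pdivrMr // mul1r lerDl.
have -> : (size (a :: b :: s))%:R = K + 1 by rewrite /K /= -addn1 natrD.
have -> : a + A = (K + 1) * (t * (A / K) + (1 - t) * a).
  rewrite /t; field; rewrite ?gt_eqF //.
rewrite powRM ?(ltW K10) //; last first.
  by rewrite addr_ge0 // mulr_ge0 // ?subr_ge0 // divr_ge0 // ltW.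
have hc := @conv2 r t (A/K) a r1 t0 t1 (divr_ge0 A0 (ltW K0)) a0.
have PK0 : 0 < powR K (r - 1) by rewrite powR_gt0.
have P10 : 0 < powR (K+1) (r - 1) by rewrite powR_gt0.
have eK : powR K r = K * powR K (r-1) by rewrite mulr_powRB1 // ltW.
have eK1 : powR (K+1) r = (K+1) * powR (K+1) (r-1) by rewrite mulr_powRB1 // ltW.
apply: le_trans (ler_wpM2l (powR_ge0 _ _) hc) _.
rewrite powRM ?invr_ge0 ?(ltW K0) // powRV // eK eK1.
have -> : (K + 1) * powR (K + 1) (r - 1) *
    (t * (powR A r * (K * powR K (r - 1))^-1) + (1 - t) * powR a r)
  = powR (K + 1) (r - 1) * (powR A r / powR K (r - 1)) + powR (K + 1) (r - 1) * powR a r.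
  by rewrite /t; field; rewrite ?gt_eqF.
rewrite mulrDr addrC lerD2l ler_wpM2l ?(ltW P10) //.
by rewrite ler_pdivrMr // mulrC.
Qed.


Fixpoint sgnp (x : T) (pa : seq T) : R :=
  if pa is y :: pa' then sigma x y * sgnp y pa' else 1.
Fixpoint epairs (x : T) (pa : seq T) : seq (T * T) :=
  if pa is y :: pa' then (x, y) :: epairs y pa' else [::].

Lemma epairs_mem x pa a b : (a, b) \in epairs x pa -> (a \in x :: pa) && (b \in pa).
Proof.
elim: pa x => [|y pa IH] x //=.
rewrite in_cons => /orP [/eqP [-> ->]|/IH /andP [h1 h2]].
  by rewrite !in_cons !eqxx.
by apply/andP; split; rewrite in_cons ?h1 ?h2 orbT.
Qed.

Lemma epairs_e x pa u : path e x pa -> u \in epairs x pa -> e u.1 u.2.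
Proof.
elim: pa x => [|y pa IH] x //= /andP [exy hp].
by rewrite in_cons => /orP [/eqP -> //|/(IH _ hp)].
Qed.

Lemma epairs_uniq x pa : uniq (x :: pa) -> uniq (epairs x pa).
Proof.
elim: pa x => [|y pa IH] x //=.
rewrite in_cons negb_or => /andP [/andP [nxy nxp] /andP [nyp up]].
rewrite IH /= ?nyp ?up // andbT.
apply/negP => /(@epairs_mem y pa x y) /andP [h _].
by move: h; rewrite in_cons (negbTE nxp) orbF (negbTE nxy).
Qed.

Lemma index_cons' (z x : T) s : index z (x :: s) = if x == z then 0%N else (index z s).+1.
Proof. by []. Qed.

Lemma epairs_index x pa a b : uniq (x :: pa) -> (a, b) \in epairs x pa ->
  index b (x :: pa) = (index a (x :: pa)).+1.
Proof.
elim: pa x => [|y pa IH] x //=.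
rewrite in_cons negb_or => /andP [/andP [nxy nxp] /andP [nyp up]].
rewrite in_cons => /orP [/eqP [-> ->]|hin].
  rewrite /index /= (negbTE nxy) !eqxx. by [].
have /andP [ha hb] := @epairs_mem y pa a b hin.
have nxa : (x == a) = false.
  by apply/eqP => xa; move: ha; rewrite -xa in_cons (negbTE nxy) (negbTE nxp).
have nxb : (x == b) = false.
  by apply/eqP => xb; move: hb; rewrite -xb (negbTE nxp).
rewrite nxb nxa; have := IH y _ hin; rewrite !index_cons' => -> //=; by rewrite nyp.
Qed.

Lemma Q_uniq x pa : uniq (x :: pa) ->
  uniq (epairs x pa ++ map (fun u => (u.2, u.1)) (epairs x pa)).
Proof.
move=> up; rewrite cat_uniq epairs_uniq //= map_inj_uniq ?epairs_uniq ?andbT //;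
  last by move=> [? ?] [? ?] /= [-> ->].
apply/hasPn => -[a b] /mapP [[c d] hcd /= [-> ->]].
apply/negP => hdc.
have h1 := @epairs_index x pa c d up hcd; have h2 := @epairs_index x pa d c up hdc.
by move: h1; rewrite h2; lia.
Qed.


Lemma sig_norm x y : e x y -> `|sigma x y| = 1.
Proof. by move=> /hsig [_ [->|->]]; rewrite ?normrN normr1. Qed.

Lemma var_path (f : T -> R) x pa : path e x pa ->
  `|f x - sgnp x pa * f (last x pa)| <=
    \sum_(u <- epairs x pa) `|sigma u.1 u.2 * f u.2 - f u.1|.
Proof.
elim: pa x => [|y pa IH] x /=; first by rewrite mul1r subrr normr0 big_nil.
case/andP => exy hp; rewrite big_cons /=.
have -> : f x - sigma x y * sgnp y pa * f (last y pa) =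
  (f x - sigma x y * f y) + sigma x y * (f y - sgnp y pa * f (last y pa)) by ring.
apply: le_trans (ler_normD _ _) _.
rewrite normrM sig_norm // mul1r distrC lerD2l.
exact: IH.
Qed.

Lemma sgnp_pm x pa : path e x pa -> sgnp x pa = 1 \/ sgnp x pa = -1.
Proof.
elim: pa x => [|y pa IH] x /=; first by left.
case/andP => exy /IH [->|->]; rewrite ?mulr1 ?mulrN1;
  case: (hsig _ _ exy) => _ [->|->]; rewrite ?opprK; by [left|right].
Qed.

Lemma sgnp_rcons x pa y : sgnp x (rcons pa y) = sgnp x pa * sigma (last x pa) y.
Proof.
elim: pa x => [|z pa IH] x /=; first by rewrite mulr1 mul1r.
by rewrite IH mulrA.
Qed.

Lemma phipN t : phip p (- t) = - phip p t.
Proof. by rewrite /phip oppr_eq0; case: eqP => _; rewrite ?oppr0 // normrN mulrN. Qed.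

Lemma phipMs s t : (s = 1 \/ s = -1) -> phip p (s * t) = s * phip p t.
Proof. by case=> ->; rewrite ?mul1r // !mulN1r phipN. Qed.

Lemma phip_pos t : 0 < t -> 0 < phip p t.
Proof.
move=> t0; rewrite /phip gt_eqF // mulr_gt0 // powR_gt0 //.
by rewrite normr_gt0 gt_eqF.
Qed.

Lemma tphip t : t * phip p t = powR `|t| p.
Proof.
rewrite /phip; case: eqP => [->|/eqP t0]; first by rewrite mulr0 normr0 powR0 // gt_eqF // (lt_trans ltr01).
have nt0 : 0 <= `|t| by [].
have -> : t * (powR `|t| (p - 2) * t) = `|t| * (`|t| * powR `|t| (p - 1 - 1)).
  have -> : p - 1 - 1 = p - 2 by ring.
  have -> : t * (powR `|t| (p - 2) * t) = powR `|t| (p - 2) * (t * t) by ring.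
  have -> : t * t = `|t| * `|t|.
    by rewrite -normrM ger0_norm // -expr2 sqr_ge0.
  by ring.
by rewrite mulr_powRB1 ?subr_gt0 // mulr_powRB1 // (lt_trans ltr01).
Qed.

Lemma degx_lap (f : T -> R) x :
  (deg e x)%:R * (- signed_pLap e sigma p f x) =
  - \sum_(y | e x y) phip p (sigma x y * f y - f x).
Proof.
rewrite /signed_pLap mulrN mulrA; have [d0|d0] := eqVneq (deg e x) 0%N.
  rewrite big1 ?mulr0 ?oppr0 // => y exy.
  move: d0; rewrite /deg => /card0_eq /(_ y); rewrite inE exy //.
by rewrite mulfV ?mul1r // pnatr_eq0.
Qed.


Lemma swap_sum (F : T -> T -> R) :
  \sum_x \sum_(y | e x y) F x y = \sum_x \sum_(y | e x y) F y x.
Proof.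
under eq_bigr do rewrite big_mkcond.
rewrite exchange_big /=; apply: eq_bigr => y _.
rewrite [RHS]big_mkcond; apply: eq_bigr => x _.
by rewrite hsym.
Qed.


Lemma rayleigh (f : T -> R) (lambda : R) :
  (forall x, - signed_pLap e sigma p f x = lambda * phip p (f x)) ->
  2 * lambda * \sum_x (deg e x)%:R * powR `|f x| p =
  \sum_x \sum_(y | e x y) powR `|sigma x y * f y - f x| p.
Proof.
move=> heig.
pose B x y := f x * phip p (sigma x y * f y - f x).
have hB : forall x y, e x y -> B x y + B y x = - powR `|sigma x y * f y - f x| p.
  move=> x y exy; rewrite /B; have [sxy s2] := hsig _ _ exy.
  have -> : sigma y x * f x - f y = - sigma x y * (sigma x y * f y - f x).
    rewrite -sxy; case: s2 => ->; ring.
  rewrite phipMs; last by case: s2 => ->; rewrite ?opprK; [right|left].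
  rewrite -tphip; ring.
have hl : lambda * \sum_x (deg e x)%:R * powR `|f x| p = - \sum_x \sum_(y | e x y) B x y.
  rewrite mulr_sumr -sumrN; apply: eq_bigr => x _.
  rewrite -tphip.
  have -> : lambda * ((deg e x)%:R * (f x * phip p (f x))) =
    f x * ((deg e x)%:R * (lambda * phip p (f x))) by ring.
  by rewrite -heig degx_lap mulrN mulr_sumr.
have -> : 2 * lambda * \sum_x (deg e x)%:R * powR `|f x| p =
   - \sum_x \sum_(y | e x y) B x y - \sum_x \sum_(y | e x y) B y x.
  rewrite -mulrA hl (swap_sum B). by ring.
rewrite -opprD -big_split /= -sumrN; apply: eq_bigr => x _.
rewrite -big_split /= -sumrN; apply: eq_bigr => y exy.
by rewrite hB // opprK.
Qed.

Lemma sub_sum (U : finType) (s : seq U) (P : pred U) (F : U -> R) :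
  uniq s -> all P s -> (forall u, P u -> 0 <= F u) ->
  \sum_(u <- s) F u <= \sum_(u | P u) F u.
Proof.
move=> us aP F0; rewrite big_uniq //= (bigID (fun u => u \in s) P) /=.
rewrite -[X in X <= _]addr0 lerD //; last by rewrite sumr_ge0 // => i /andP [/F0].
rewrite le_eqVlt; apply/orP; left; apply/eqP; apply: eq_bigl => u.
by case: (boolP (u \in s)) => h; rewrite ?andbT ?andbF // (allP aP).
Qed.

Lemma pairs_sum (F : T -> T -> R) :
  \sum_x \sum_(y | e x y) F x y = \sum_(u : T * T | e u.1 u.2) F u.1 u.2.
Proof. by rewrite pair_big_dep. Qed.

Lemma vol_pairs : vol R e = \sum_(u : T * T | e u.1 u.2) 1.
Proof.
rewrite -(pairs_sum (fun _ _ => 1)) /vol; apply: eq_bigr => x _.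
rewrite /deg cardsE -sum1_card natr_sum. by apply: eq_bigl => y.
Qed.

Section Main.
Variables (f : T -> R) (lambda : R) (x0 : T).
Hypotheses (heig : forall x, - signed_pLap e sigma p f x = lambda * phip p (f x))
  (hpos : 0 < f x0) (hmax : forall y, `|f y| <= f x0) (lam0 : lambda != 0).

Lemma deg_x0 : (0 < deg e x0)%N.
Proof.
rewrite lt0n; apply/negP => /eqP d0.
have := heig x0; rewrite /signed_pLap d0 invr0 mul0r oppr0 => /esym /eqP.
by rewrite mulf_eq0 (negbTE lam0) /= gt_eqF // phip_pos.
Qed.

Definition tau (y : T) : R := if 0 < f y then 1 else -1.

Lemma tau_pm y : tau y = 1 \/ tau y = -1.
Proof. by rewrite /tau; case: ifP; [left|right]. Qed.

Lemma caseB : (forall P, path e x0 P -> uniq (x0 :: P) ->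
  0 < sgnp x0 P * f (last x0 P)) -> False.
Proof.
move=> hP.
have htau : forall P, path e x0 P -> uniq (x0 :: P) -> sgnp x0 P = tau (last x0 P).
  move=> P hp hu; have := hP P hp hu; rewrite /tau.
  case: (@sgnp_pm x0 P hp) => ->; rewrite ?mul1r ?mulN1r => h; first by rewrite h.
  by rewrite ltNge ltW // -oppr_gt0.
have hex : forall y, exists P, [/\ path e x0 P, uniq (x0 :: P) & last x0 P = y].
  move=> y; have /connectP [P hp ->] := hconn x0 y.
  case: (shortenP hp) => P' hp' hu' _; by exists P'; split.
have hf : forall y, 0 < tau y * f y.
  move=> y; have [P [hp hu hl]] := hex y.
  by rewrite -hl -htau // hP.
have hext : forall P u v, path e x0 P -> uniq (x0 :: P) -> last x0 P = u ->
    v \notin x0 :: P -> e u v -> tau v = tau u * sigma u v.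
  move=> P u v hp hu hl hv euv.
  have hp' : path e x0 (rcons P v) by rewrite rcons_path hp hl.
  have hu' : uniq (x0 :: rcons P v) by rewrite -rcons_cons rcons_uniq hv hu.
  by have := htau _ hp' hu'; rewrite last_rcons sgnp_rcons (htau _ hp hu) hl => <-.
have hedge : forall x y, e x y -> tau y = tau x * sigma x y.
  move=> x y exy; have [P [hp hu hl]] := hex x.
  case: (boolP (y \in x0 :: P)) => hy; last exact: hext hp hu hl hy exy.
  have eyx : e y x by rewrite hsym.
  have [sxy s2] := hsig _ _ exy.
  suff -> : tau x = tau y * sigma y x.
    by rewrite -mulrA -sxy; case: s2 => ->; rewrite ?mulrNN ?mulr1.
  have xy : x != y by apply/eqP => xy; move: exy; rewrite xy hirr.
  move: hy; rewrite in_cons => /orP [/eqP yx0|yP].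
    apply: (hext [::]) => //=.
    rewrite in_cons orbF; apply/eqP => h; move: xy; by rewrite h yx0 eqxx.
  move: hp hu hl; case/splitPr: yP => p1' p2 hp hu hl.
  have hu2 : uniq ((x0 :: rcons p1' y) ++ p2) by rewrite cat_cons cat_rcons.
  apply: (hext (rcons p1' y)).
  - move: hp; rewrite cat_path /= => /and3P [h1 h2 _].
    by rewrite rcons_path h1 h2.
  - by move: hu2; rewrite cat_uniq => /andP [].
  - by rewrite last_rcons.
  - have xp2 : x \in p2.
      move: hl; rewrite last_cat /= => hl.
      have : x \in y :: p2 by rewrite -hl mem_last.
      by rewrite in_cons (negbTE xy).
    move: hu2; rewrite cat_uniq => /and3P [_ /hasPn /(_ x xp2) //].
  - exact: eyx.
pose h y := tau y * f y.
have hZ : \sum_x \sum_(y | e x y) phip p (h y - h x) = 0.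
  set Z := LHS.
  have : Z = - Z.
    rewrite {2}/Z swap_sum -sumrN; apply: eq_bigr => x _.
    rewrite -sumrN; apply: eq_bigr => y _; by rewrite -phipN opprB.
  move/eqP; rewrite -subr_eq0 opprK -mulr2n -mulr_natr mulf_eq0 pnatr_eq0 orbF.
  by move/eqP.
have hsum : \sum_x tau x * ((deg e x)%:R * (- signed_pLap e sigma p f x)) = 0.
  transitivity (- \sum_x \sum_(y | e x y) phip p (h y - h x)); last by rewrite hZ oppr0.
  rewrite -sumrN; apply: eq_bigr => x _.
  rewrite degx_lap mulrN mulr_sumr; congr (- _); apply: eq_bigr => y exy.
  rewrite -phipMs; last exact: tau_pm.
  congr (phip p _).
  by rewrite /h (hedge _ _ exy) mulrBr mulrA.
have hpos' : 0 < \sum_x tau x * ((deg e x)%:R * (- signed_pLap e sigma p f x)) / lambda.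

  have term : forall x, tau x * ((deg e x)%:R * (- signed_pLap e sigma p f x)) / lambda
      = (deg e x)%:R * phip p (h x).
    move=> x; rewrite heig /h phipMs; last exact: tau_pm.
    by field.
  under eq_bigr do rewrite term.
  rewrite (bigD1 x0) //=.
  have A : 0 < (deg e x0)%:R * phip p (h x0) by rewrite mulr_gt0 ?ltr0n ?deg_x0 // phip_pos //; apply: hf.
  apply: (lt_le_trans A); rewrite lerDl.
  by apply: sumr_ge0 => i _; rewrite mulr_ge0 // ltW // phip_pos //; apply: hf.
by move: hpos'; rewrite -mulr_suml hsum mul0r ltxx.
Qed.


Lemma powR_le (r x y : R) : 0 <= r -> 0 <= x -> x <= y -> powR x r <= powR y r.
Proof.
move=> r0 x0' xy; apply: ge0_ler_powR => //; rewrite nnegrE //; exact: le_trans xy.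
Qed.

Lemma main_bound : 2^-1 * powR (2 / (p * vol R e)) p <= lambda.
Proof.
have dx0 := deg_x0.
have p0 : 0 < p by apply: lt_trans p1.
set D := \sum_x (deg e x)%:R * powR `|f x| p.
set N := \sum_x \sum_(y | e x y) powR `|sigma x y * f y - f x| p.
have hR : 2 * lambda * D = N by apply: rayleigh.
have D0 : 0 < D.
  have A : 0 < (deg e x0)%:R * powR `|f x0| p.
    by rewrite mulr_gt0 ?ltr0n // powR_gt0 // normr_gt0 gt_eqF.
  apply: (lt_le_trans A); rewrite /D (bigD1 x0) //= lerDl.
  by apply: sumr_ge0 => i _; rewrite mulr_ge0 ?powR_ge0.
have N0 : 0 <= N.
  by apply: sumr_ge0 => i _; apply: sumr_ge0 => j _; rewrite powR_ge0.
have lam_pos : 0 < lambda.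
  rewrite lt_neqAle eq_sym lam0 /= leNgt; apply/negP => hl.
  have : 2 * lambda * D < 0 by nra.
  by rewrite hR ltNge N0.
set V := vol R e.
have V0 : 0 < V.
  apply: (@lt_le_trans _ _ (deg e x0)%:R); first by rewrite ltr0n.
  rewrite /V /vol (bigD1 x0) //= lerDl.
  by apply: sumr_ge0.
have DV : D <= V * powR (f x0) p.
  rewrite /V /vol mulr_suml; apply: ler_sum => x _; rewrite ler_wpM2l //.
  by apply: powR_le; [exact: ltW p0 | exact: normr_ge0 | exact: hmax].
case: (pselect (exists P, [/\ path e x0 P, uniq (x0 :: P) &
    sgnp x0 P * f (last x0 P) <= 0])) => [[P [hp hu hneg]] | hB]; last first.
  exfalso; apply: caseB => P hp hu; rewrite ltNge; apply/negP => h.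
  by apply: hB; exists P.
pose Q1 := epairs x0 P.
pose Q := Q1 ++ map (fun u => (u.2, u.1)) Q1.
pose a (u : T * T) := `|sigma u.1 u.2 * f u.2 - f u.1|.
have hQ1 : f x0 <= \sum_(u <- Q1) a u.
  apply: le_trans (@var_path f x0 P hp).
  apply: le_trans (ler_norm _); rewrite lerDl oppr_ge0 //.
have hsa : \sum_(u <- map (fun u => (u.2, u.1)) Q1) a u = \sum_(u <- Q1) a u.
  rewrite big_map big_seq_cond [RHS]big_seq_cond; apply: eq_bigr => u /andP [hu' _].
  have eu := @epairs_e x0 P u hp hu'.
  rewrite /a /=; have [s1 s2] := hsig _ _ eu; rewrite -s1.
  by case: s2 => ->; rewrite ?mul1r ?mulN1r; [exact: distrC | rewrite addrC].
have huQ : uniq Q by apply: Q_uniq.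
have heQ : all (fun u => e u.1 u.2) Q.
  rewrite all_cat; apply/andP; split; apply/allP => u.
    exact: (@epairs_e x0 P u hp).
  by case/mapP => v hv -> /=; rewrite hsym; exact: (@epairs_e x0 P v hp).
have hS : 2 * f x0 <= \sum_(u <- Q) a u.
  have -> : 2 * f x0 = f x0 + f x0 by ring.
  by rewrite big_cat hsa; apply: lerD.
have hall : all (fun x => 0 <= x) (map a Q).
  by rewrite all_map; apply/allP => u _; exact: normr_ge0.
have hpm := @pmean p _ (ltW p1) hall.
rewrite !big_map size_map in hpm.
have hsize : (size Q)%:R <= V.
  rewrite /V vol_pairs -sum1_size natr_sum.
  by apply: (@sub_sum _ Q (fun u : T * T => e u.1 u.2) (fun _ => 1)) => // u _; exact: ler01.
have hNQ : \sum_(u <- Q) powR (a u) p <= N.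
  rewrite /N (pairs_sum (fun x y => powR `|sigma x y * f y - f x| p)).
  by apply: sub_sum => // u _; exact: powR_ge0.
have pm1 : 0 <= p - 1 by rewrite subr_ge0 ltW.
have step1 : powR (2 * f x0) p <= powR V (p - 1) * N.
  apply: (@le_trans _ _ (powR (\sum_(u <- Q) a u) p)).
    by apply: powR_le => //; [exact: ltW p0 | rewrite mulr_ge0 // ltW].
  apply: le_trans hpm _.
  apply: ler_pM; [exact: powR_ge0 | by apply: sumr_ge0 => u _; exact: powR_ge0
    | apply: powR_le => //; exact: ler0n | exact: hNQ].
set Mp := powR (f x0) p.
have Mp0 : 0 < Mp by rewrite powR_gt0.
set P2 := powR 2 p.
set VP := powR V p.
have eVP : V * powR V (p - 1) = VP by rewrite mulr_powRB1 // ltW.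
have e2 : powR (2 * f x0) p = P2 * Mp by rewrite powRM // ltW.
have key : P2 <= 2 * lambda * VP.
  have h1 : P2 * Mp <= powR V (p - 1) * N by rewrite -e2.
  have h2 : powR V (p - 1) * N <= 2 * lambda * VP * Mp.
    rewrite -hR.
    apply: (@le_trans _ _ (powR V (p - 1) * (2 * lambda * (V * Mp)))).
      by rewrite ler_wpM2l ?powR_ge0 // ler_wpM2l // mulr_ge0 // (ltW lam_pos).
    rewrite -eVP le_eqVlt; apply/orP; left; apply/eqP; ring.
  by have := le_trans h1 h2; rewrite ler_pM2r.
have VP0 : 0 < VP by rewrite powR_gt0.
have Pp1 : 1 <= powR p p.
  by apply: le_trans (ltW p1) _; apply: le1r_powR; rewrite ltW.
rewrite powRM ?invr_ge0 ?mulr_ge0 ?(ltW p0) ?(ltW V0) //.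
rewrite powRV ?mulr_gt0 // powRM ?(ltW p0) ?(ltW V0) // -/P2 -/VP.
set Pp := powR p p.
have Pp0 : 0 < Pp by apply: lt_le_trans Pp1.
rewrite mulrA ler_pdivrMr ?mulr_gt0 //.
have : lambda * VP <= lambda * (Pp * VP).
  by rewrite ler_pM2l // ler_peMl // ltW.
nra.
Qed.

End Main.

End All.

Theorem theorem4p3 (R : realType) (T : finType) (e : rel T)
  (sigma : T -> T -> R) (p : R) :
  simple_graph e -> connected_graph e -> signature e sigma -> 1 < p ->
  forall lambda : R, is_eigenvalue e sigma p lambda -> lambda != 0 ->
    lambda >= 2^-1 * powR (2 / (p * vol R e)) p.
Proof.
move=> [hsym hirr] hconn hsig p1 lambda [f [[x1 fx1] heig]] lam0.
have [x0 _ hx0] := @arg_maxP _ _ T x1 xpredT (fun i => `|f i|) isT.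
have hx : forall y, `|f y| <= `|f x0| by move=> y; exact: hx0.
have fx0 : f x0 != 0.
  by rewrite -normr_gt0; apply: lt_le_trans (hx x1); rewrite normr_gt0.
case: (ltrgtP (f x0) 0) => [neg|pos|z]; last by move: fx0; rewrite z eqxx.
- apply: (@main_bound R T e sigma p p1 hsym hirr hsig hconn (fun x => - f x) lambda x0) => //.
  + move=> x; rewrite phipN mulrN -(heig x) opprK /signed_pLap.
    rewrite -mulrN -sumrN; congr (_ * _); apply: eq_bigr => y _.
    by rewrite -phipN; congr (phip p _); ring.
  + by rewrite oppr_gt0.
  + by move=> y; rewrite normrN -(ltr0_norm neg) hx.
- apply: (@main_bound R T e sigma p p1 hsym hirr hsig hconn f lambda x0) => //.
  by move=> y; rewrite -(gtr0_norm pos) hx.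
Qed.
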